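(* Let $X_1,\dots,X_n$ be i.i.d. $\mathsf{Bernoulli}(p)$ with $p\in[\frac12,1)$, and let $Y_k=X_k\oplus V_k$ for $k=1,\dots,n$, where $V_1,\dots,V_n$ are i.i.d. $\mathsf{Bernoulli}(\alpha)$, independent of $X^n$, with $\alpha\in[0,\frac12)$ and $\bar\alpha>p$. Let $q=\alpha\bar p+\bar\alpha p$ and $\zeta(\varepsilon)=\frac{\bar\alpha\bar p+\bar\alpha p-\varepsilon}{\bar\alpha p-\alpha\bar p}$. Then for all $\varepsilon\in[p,\bar\alpha]$, $$\mathcal{h}^{\mathsf i}_n(\varepsilon)=1-\zeta(\varepsilon)q.$$
   Context: $\bar a=1-a$; $\oplus$ is addition mod 2. $\mathsf{P}_{\mathsf{c}}(X^n|Z^n)=\sum_{z^n}\max_{x^n}P_{X^nZ^n}(x^n,z^n)$. $\mathcal{h}^{\mathsf i}_n(\varepsilon)=\sup\mathsf{P}_{\mathsf{c}}^{1/n}(Y^n|Z^n)$, where the supremum is over all memoryless privacy filters of the form $P_{Z^n|Y^n}(z^n|y^n)=\prod_{k=1}^n\mathsf{W}(z_k|y_k)$ for $y^n,z^n\in\{0,1\}^n$, with $\mathsf{W}$ a single channel from $\{0,1\}$ to $\{0,1\}$ (with $Z^n$ generated from $Y^n$ only, so $X^n - Y^n - Z^n$), satisfying $\mathsf{P}_{\mathsf{c}}^{1/n}(X^n|Z^n)\le\varepsilon$. *)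

(* Defs.v *)
From HB Require Import structures.
From mathcomp Require Import all_boot all_order all_algebra.
From mathcomp Require Import all_classical all_reals exp.
Set Implicit Arguments. Unset Strict Implicit. Unset Printing Implicit Defensive.
Import Order.TTheory GRing.Theory Num.Theory.
Local Open Scope ring_scope.
Local Open Scope classical_set_scope.

Section Defs.
Variable R : realType.

Definition bern (p : R) (b : bool) : R := if b then p else 1 - p.

(* A binary channel W, written W y z = W(z|y), is a stochastic matrix. *)
Definition channel (W : bool -> bool -> R) : Prop :=
  forall y, (forall z, 0 <= W y z) /\ W y false + W y true = 1.

Notation seqn n := {ffun 'I_n -> bool}.

(* Joint pmf P_{X^n Y^n Z^n}(x,y,z): X_k iid Bern(p), Y_k = X_k (+) V_k with
   V_k iid Bern(alpha) independent of X^n, and Z^n from Y^n through the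
   memoryless filter prod_k W(z_k|y_k). *)
Definition jointP (n : nat) (p alpha : R) (W : bool -> bool -> R)
  (x y z : seqn n) : R :=
  \prod_(k < n) (bern p (x k) * bern alpha (addb (x k) (y k)) * W (y k) (z k)).

Definition PcX (n : nat) (p alpha : R) W : R :=
  \sum_(z : seqn n) \big[Num.max/0]_(x : seqn n)
      \sum_(y : seqn n) jointP p alpha W x y z.

Definition PcY (n : nat) (p alpha : R) W : R :=
  \sum_(z : seqn n) \big[Num.max/0]_(y : seqn n)
      \sum_(x : seqn n) jointP p alpha W x y z.

Definition h_i (n : nat) (p alpha eps : R) : R :=
  sup [set r | exists W, channel W /\
        powR (PcX n p alpha W) (n%:R^-1) <= eps /\
        r = powR (PcY n p alpha W) (n%:R^-1)].

End Defs.

(* Main.v *)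
Require Import Defs.
From HB Require Import structures.
From mathcomp Require Import all_boot all_order all_algebra.
From mathcomp Require Import all_classical all_reals exp.
From mathcomp Require Import ring lra.
Import Order.TTheory GRing.Theory Num.Theory.
Local Open Scope ring_scope.

Section H.
Variable R : realType.


Lemma bigmax_bool (F : bool -> R) : (forall b, 0 <= F b) ->
  \big[Num.max/0]_(b : bool) F b = Num.max (F true) (F false).
Proof.
move=> F0; rewrite /index_enum !unlock /=.
by rewrite (@max_l _ _ (F false) 0) ?F0.
Qed.

Lemma bigmax_prod (I : finType) (G : I -> bool -> R) :
  (forall i b, 0 <= G i b) ->
  \big[Num.max/0]_(f : {ffun I -> bool}) \prod_i G i (f i)
  = \prod_i \big[Num.max/0]_(b : bool) G i b.
Proof.
move=> G0; apply/le_anti/andP; split.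
  apply: bigmax_le; first by apply: prodr_ge0 => i _; rewrite bigmax_bool // le_max G0.
  move=> f _; apply: ler_prod => i _; rewrite G0 /=.
  by rewrite bigmax_bool // le_max; case: (f i); rewrite lexx ?orbT.
pose f := [ffun i => G i false <= G i true].
apply: le_trans (le_bigmax _ _ f).
apply: ler_prod => i _; rewrite bigmax_bool //.
rewrite le_max G0 /= ffunE.
by case: (leP (G i false) (G i true)).
Qed.

Lemma tensor n (F : bool -> bool -> bool -> R) : (forall a b z, 0 <= F a b z) ->
  \sum_(z : {ffun 'I_n -> bool}) \big[Num.max/0]_(a : {ffun 'I_n -> bool})
     \sum_(b : {ffun 'I_n -> bool}) \prod_(k < n) F (a k) (b k) (z k)
  = (\sum_(z : bool) \big[Num.max/0]_(a : bool) \sum_(b : bool) F a b z) ^+ n.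
Proof.
move=> F0.
transitivity (\sum_(z : {ffun 'I_n -> bool}) \big[Num.max/0]_(a : {ffun 'I_n -> bool})
    \prod_(k < n) \sum_(b : bool) F (a k) b (z k)).
  by apply: eq_bigr => z _; apply: eq_bigr => a _; rewrite bigA_distr_bigA.
transitivity (\sum_(z : {ffun 'I_n -> bool})
    \prod_(k < n) \big[Num.max/0]_(a : bool) \sum_(b : bool) F a b (z k)).
  apply: eq_bigr => z _.
  rewrite (@bigmax_prod _ (fun k a => \sum_(b : bool) F a b (z k))) //.
  by move=> i b; apply: sumr_ge0.
rewrite -(bigA_distr_bigA (fun (k : 'I_n) z => \big[Num.max/0]_(a : bool) \sum_(b : bool) F a b z)).
by rewrite prodr_const card_ord.
Qed.



Lemma key (p a u v q : R) : q = a * (1 - p) + (1 - a) * p -> 2^-1 <= p -> p <= 1 -> 0 <= a -> a <= 1 ->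
  0 <= u -> u <= 1 -> 0 <= v -> v <= 1 ->
  q * (1 - a) <= q * (Num.max (p * (1-a) * (1-v) + p * a * (1-u)) ((1-p) * a * (1-v) + (1-p) * (1-a) * (1-u))
                    + Num.max (p * (1-a) * v + p * a * u) ((1-p) * a * v + (1-p) * (1-a) * u))
     + (p - a) * (1 - (Num.max (q * (1-v)) ((1-q) * (1-u)) + Num.max (q * v) ((1-q) * u))).
Proof.
move=> qE hp1 hp2 ha1 ha2 hu1 hu2 hv1 hv2.
have hq : 0 <= q by rewrite qE; nra.
have hK2 : 0 <= 2 * a * (1-a) * (2 * p-1).
  by apply: mulr_ge0; [apply: mulr_ge0; [apply: mulr_ge0|]|]; lra.
have hK : 0 <= (1-u) * (2 * a * (1-a) * (2 * p-1)) by apply: mulr_ge0 => //; lra.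
have hK' : 0 <= u * (2 * a * (1-a) * (2 * p-1)) by apply: mulr_ge0 => //; lra.
have hB : 0 <= q * (2 * p-1) by apply: mulr_ge0 => //; lra.
set M1 := Num.max (p * (1-a) * (1-v) + p * a * (1-u)) _.
set M2 := Num.max (p * (1-a) * v + p * a * u) _.
have m11 : 0 <= q * (M1 - (p * (1-a) * (1-v) + p * a * (1-u))).
  by apply: mulr_ge0 => //; rewrite subr_ge0 le_max lexx.
have m10 : 0 <= q * (M1 - ((1-p) * a * (1-v) + (1-p) * (1-a) * (1-u))).
  by apply: mulr_ge0 => //; rewrite subr_ge0 le_max lexx orbT.
have m21 : 0 <= q * (M2 - (p * (1-a) * v + p * a * u)).
  by apply: mulr_ge0 => //; rewrite subr_ge0 le_max lexx.
have m20 : 0 <= q * (M2 - ((1-p) * a * v + (1-p) * (1-a) * u)).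
  by apply: mulr_ge0 => //; rewrite subr_ge0 le_max lexx orbT.
case: (leP (q * (1-v)) ((1-q) * (1-u))) => h1; case: (leP (q * v) ((1-q) * u)) => h2.
-  rewrite qE in hB m11 m21 * ; lra.
-  rewrite qE in hK' m10 m21 * ; lra.
- rewrite qE in hK m11 m20 * ; lra.
- rewrite qE in hK2 m11 m21 * ; lra.
Qed.


Definition single (F : bool -> bool -> bool -> R) : R :=
  \sum_(z : bool) \big[Num.max/0]_(a : bool) \sum_(b : bool) F a b z.

Lemma single_form (F : bool -> bool -> bool -> R) : (forall a b z, 0 <= F a b z) ->
  single F = Num.max (F true true true + F true false true) (F false true true + F false false true)
           + Num.max (F true true false + F true false false) (F false true false + F false false false).
Proof.
move=> F0; rewrite /single big_bool /= !bigmax_bool ?big_bool //= => b;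
  by rewrite big_bool addr_ge0.
Qed.

Lemma root_pow (x : R) n : (0 < n)%N -> 0 <= x -> powR (x ^+ n) (n%:R^-1) = x.
Proof.
move=> hn hx; rewrite -powR_mulrn // -powRrM mulfV ?powRr1 //.
by rewrite pnatr_eq0 -lt0n.
Qed.

Lemma bern_ge0 (p : R) b : 0 <= p -> p <= 1 -> 0 <= bern p b.
Proof. by case: b => /= ? ?; lra. Qed.

Lemma single_ge0 F : (forall a b z, 0 <= F a b z) -> 0 <= single F.
Proof.
by move=> F0; rewrite single_form //; apply: addr_ge0; rewrite le_max addr_ge0.
Qed.

Lemma FX_ge0 (p a : R) W : channel W -> 0 <= p -> p <= 1 -> 0 <= a -> a <= 1 ->
  forall x y z, 0 <= bern p x * bern a (addb x y) * W y z.
Proof.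
move=> hW ? ? ? ? x y z; apply: mulr_ge0; first by apply: mulr_ge0; apply: bern_ge0.
by case: (hW y) => ->.
Qed.

Lemma maxr_l (x y : R) : y <= x -> Num.max x y = x.
Proof. by move=> h; case: (leP x y) => // hxy; apply/eqP; rewrite eq_le h hxy. Qed.

Lemma maxr_r (x y : R) : x <= y -> Num.max x y = y.
Proof. by move=> h; case: (leP x y) => // hxy; apply/eqP; rewrite eq_le h (ltW hxy). Qed.

End H.

Theorem proposition2 (R : realType) (n : nat) (p alpha eps : R) :
  (0 < n)%N ->
  2^-1 <= p -> p < 1 ->
  0 <= alpha -> alpha < 2^-1 -> p < 1 - alpha ->
  p <= eps -> eps <= 1 - alpha ->
  let q := alpha * (1 - p) + (1 - alpha) * p in
  let zeta := ((1 - alpha) * (1 - p) + (1 - alpha) * p - eps) /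
              ((1 - alpha) * p - alpha * (1 - p)) in
  h_i n p alpha eps = 1 - zeta * q.
Proof.
move=> hn hp1 hp2 ha1 ha2 hpa he1 he2 q zeta.
have qE : q = alpha * (1 - p) + (1 - alpha) * p by [].
have zdef : zeta = ((1 - alpha) * (1 - p) + (1 - alpha) * p - eps) /
              ((1 - alpha) * p - alpha * (1 - p)) by [].
clearbody q zeta.
have hap : alpha < p := lt_le_trans ha2 hp1.
have hpa' : 0 < p - alpha by lra.
have zE : zeta * (p - alpha) = 1 - alpha - eps.
  have hD : (1 - alpha) * p - alpha * (1 - p) = p - alpha by ring.
  rewrite zdef hD divfK; first by ring.
  by apply/eqP => h; lra.
have hq : 0 <= q by rewrite qE; apply: addr_ge0; apply: mulr_ge0; lra.
have hX0 : forall W : bool -> bool -> R, channel W -> forall x y z, 0 <= bern p x * bern alpha (addb x y) * W y z.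
  by move=> W hW; apply: FX_ge0 => //; lra.
have hPcX : forall W : bool -> bool -> R, channel W ->
    powR (PcX n p alpha W) n%:R^-1 = @single R (fun x y z => bern p x * bern alpha (addb x y) * W y z).
  move=> W hW; rewrite /PcX /jointP.
  rewrite (@tensor _ _ (fun x y z => bern p x * bern alpha (addb x y) * W y z)) => [|*]; last by apply: hX0.
  by apply: root_pow => //; apply: single_ge0 => *; apply: hX0.
have hPcY : forall W : bool -> bool -> R, channel W ->
    powR (PcY n p alpha W) n%:R^-1 = @single R (fun y x z => bern p x * bern alpha (addb x y) * W y z).
  move=> W hW; rewrite /PcY /jointP.
  rewrite (@tensor _ _ (fun y x z => bern p x * bern alpha (addb x y) * W y z)) => [|*]; last by apply: hX0.
  by apply: root_pow => //; apply: single_ge0 => *; apply: hX0.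
have hWt : forall W : bool -> bool -> R, channel W -> W true true = 1 - W true false.
  move=> W; rewrite /channel => hW; have [_ h] := hW true; rewrite -h; ring.
have hWf : forall W : bool -> bool -> R, channel W -> W false true = 1 - W false false.
  by move=> W; rewrite /channel => hW; have [_ h] := hW false; rewrite -h; ring.
have formX : forall W : bool -> bool -> R, channel W ->
  @single R (fun x y z => bern p x * bern alpha (addb x y) * W y z) =
  Num.max (p * (1 - alpha) * (1 - W true false) + p * alpha * (1 - W false false))
          ((1 - p) * alpha * (1 - W true false) + (1 - p) * (1 - alpha) * (1 - W false false))
  + Num.max (p * (1 - alpha) * W true false + p * alpha * W false false)
          ((1 - p) * alpha * W true false + (1 - p) * (1 - alpha) * W false false).
  move=> W hW; rewrite single_form => [|*]; last by apply: hX0.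
  by rewrite /= (hWt W hW) (hWf W hW).
have formY : forall W : bool -> bool -> R, channel W ->
  @single R (fun y x z => bern p x * bern alpha (addb x y) * W y z) =
  Num.max (q * (1 - W true false)) ((1 - q) * (1 - W false false))
  + Num.max (q * W true false) ((1 - q) * W false false).
  move=> W hW; rewrite single_form => [|*]; last by apply: hX0.
  rewrite /= (hWt W hW) (hWf W hW) qE.
  congr (Num.max _ _ + Num.max _ _); ring.
have hK : 0 <= (p - alpha) * (1 - q) - q * (1 - alpha - p).
  have -> : (p - alpha) * (1 - q) - q * (1 - alpha - p) = 2 * alpha * (1 - alpha) * (2 * p - 1).
    by rewrite qE; ring.
  by apply: mulr_ge0; [apply: mulr_ge0; [apply: mulr_ge0|]|]; lra.
have ub : forall W : bool -> bool -> R, channel W ->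
    @single R (fun x y z => bern p x * bern alpha (addb x y) * W y z) <= eps ->
    @single R (fun y x z => bern p x * bern alpha (addb x y) * W y z) <= 1 - zeta * q.
  move=> W hW; rewrite formX // formY //.
  have [hu0 _] := hW false; have [hv0 _] := hW true.
  have hu1 := hu0 true; have hv1 := hv0 true.
  rewrite (hWt W hW) in hv1; rewrite (hWf W hW) in hu1.
  have := @key R p alpha (W false false) (W true false) q qE hp1 (ltW hp2) ha1 (ltW (lt_trans ha2 _)) (hu0 false) _ (hv0 false) _.
  set M1 := Num.max _ _; set M2 := Num.max _ _; set Y1 := Num.max _ _; set Y2 := Num.max _ _.
  move=> /(_ _ _ _) k hX.
  have k' : q * (1 - alpha) <= q * (M1 + M2) + (p - alpha) * (1 - (Y1 + Y2)).
    apply: k; [lra | lra | lra].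
  have hqX : q * (M1 + M2) <= q * eps by apply: ler_wpM2l.
  have zq : zeta * (p - alpha) * q = (1 - alpha - eps) * q by rewrite zE.
  have : 0 <= (p - alpha) * (1 - zeta * q - (Y1 + Y2)) by lra.
  by rewrite pmulr_rge0 // subr_ge0.
have hz0 : 0 <= zeta.
  have : 0 <= zeta * (p - alpha) by rewrite zE; lra.
  by rewrite pmulr_lge0.
have hz1 : zeta <= 1.
  have : 0 <= (1 - zeta) * (p - alpha) by rewrite mulrBl mul1r zE; lra.
  by rewrite pmulr_lge0 // subr_ge0.
have hqz : q * zeta <= 1 - q.
  have : 0 <= (1 - q - q * zeta) * (p - alpha).
    have -> : (1 - q - q * zeta) * (p - alpha) = (p - alpha) * (1 - q) - q * (zeta * (p - alpha)) by ring.
    rewrite zE; have : q * (1 - alpha - eps) <= q * (1 - alpha - p) by apply: ler_wpM2l => //; lra.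
    lra.
  by rewrite pmulr_lge0 // subr_ge0.
pose W0 := fun y z : bool => if y then (if z then 1 - zeta else zeta) else (if z then 0 else 1) : R.
have cW0 : channel W0.
  by case; split; [case => /=; lra | rewrite /=; lra | case => /=; lra | rewrite /=; lra].
have X0 : @single R (fun x y z => bern p x * bern alpha (addb x y) * W0 y z) = eps.
  rewrite formX //= subrr !mulr0 !addr0 !mulr1.
  rewrite maxr_l; last first.
    have : 0 <= (1 - zeta) * (p - alpha) by apply: mulr_ge0; lra.
    lra.
  rewrite maxr_r; last first.
    have : 0 <= (1 - zeta) * (p - alpha) by apply: mulr_ge0; lra.
    lra.
  lra.
have Y0 : @single R (fun y x z => bern p x * bern alpha (addb x y) * W0 y z) = 1 - zeta * q.
  rewrite formY //= subrr !mulr0 !mulr1.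
  rewrite maxr_l; last by apply: mulr_ge0; lra.
  rewrite maxr_r //; lra.
rewrite /h_i.
set S := (X in sup X).
have Smem : S (1 - zeta * q).
  exists W0; split => //; split; first by rewrite hPcX // X0.
  by rewrite hPcY // Y0.
have Sub : forall r, S r -> r <= 1 - zeta * q.
  move=> r [W [hW [hX ->]]]; rewrite hPcY //; apply: ub => //.
  by rewrite -hPcX.
apply/le_anti/andP; split.
  by apply: ge_sup; [exists (1 - zeta * q) | move=> r /Sub].
apply: sup_upper_bound => //; split; first by exists (1 - zeta * q).
by exists (1 - zeta * q) => r /Sub.
Qed.
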